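(* Let $\gamma:[0,l]\times[0,w)\to E_1^4$, $(s,t)\mapsto\gamma(s,t)$, be a smooth inextensible one-parameter family of partially null curves in $E_1^4$ parametrized by arclength, i.e. $\left\|\frac{\partial\gamma}{\partial s}\right\|\equiv1$, with Frenet frame $\{T,N,B_1,B_2\}$, curvatures $k_1,k_2$ (and $k_3\equiv0$), and write $$\frac{\partial\gamma}{\partial t}=\beta_1T+\beta_2N+\beta_3B_1+\beta_4B_2$$ with smooth scalar functions $\beta_i$. Put $\psi_1=\langle\frac{\partial N}{\partial t},B_1\rangle$, $\psi_2=\langle\frac{\partial N}{\partial t},B_2\rangle$, $\psi_3=\langle\frac{\partial B_1}{\partial t},B_2\rangle$. Then $$\frac{\partial T}{\partial t}=\Big(\frac{\partial\beta_2}{\partial s}+\beta_1k_1-\beta_4k_2\Big)N+\Big(\frac{\partial\beta_3}{\partial s}+\beta_2k_2\Big)B_1+\frac{\partial\beta_4}{\partial s}B_2,$$ $$\frac{\partial N}{\partial t}=-\Big(\frac{\partial\beta_2}{\partial s}+\beta_1k_1-\beta_4k_2\Big)T+\psi_2B_1+\psi_1B_2,$$ $$\frac{\partial B_1}{\partial t}=-\frac{\partial\beta_4}{\partial s}T-\psi_1N+\psi_3B_1,$$ $$\frac{\partial B_2}{\partial t}=-\Big(\frac{\partial\beta_3}{\partial s}+k_2\beta_2\Big)T-\psi_2N-\psi_3B_2.$$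
   Context: $E_1^4$ is $\mathbb{R}^4$ with the Lorentzian metric $\langle x,y\rangle=-x_1y_1+x_2y_2+x_3y_3+x_4y_4$ and $\|x\|=\sqrt{|\langle x,x\rangle|}$. A partially null curve is a spacelike curve whose first binormal is a null vector. For such a curve parametrized by arclength $s$, its Frenet frame $\{T,N,B_1,B_2\}$ ($T=\partial\gamma/\partial s$) satisfies $\langle T,T\rangle=\langle N,N\rangle=1$, $\langle B_1,B_1\rangle=\langle B_2,B_2\rangle=0$, $\langle B_1,B_2\rangle=1$, all other inner products zero, and the Frenet equations $T'=k_1N$, $N'=-k_1T+k_2B_1$, $B_1'=k_3B_1$, $B_2'=-k_2N-k_3B_2$, with $k_3\equiv0$. In the family, each $s\mapsto\gamma(s,t)$ is such a curve and frame and curvatures are smooth in $(s,t)$. The flow is inextensible if $\frac{\partial}{\partial t}\|\partial\gamma/\partial u\|=0$; with the arclength parametrization $\|\partial\gamma/\partial s\|\equiv1$ for all $t$. *)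

(* Defs.v *)
From Stdlib Require Import Reals List.
From Coquelicot Require Import Coquelicot.
Open Scope R_scope.

Record V4 := mkV4 { c1 : R; c2 : R; c3 : R; c4 : R }.

Definition vadd (x y : V4) : V4 :=
  mkV4 (c1 x + c1 y) (c2 x + c2 y) (c3 x + c3 y) (c4 x + c4 y).
Definition vscal (a : R) (x : V4) : V4 :=
  mkV4 (a * c1 x) (a * c2 x) (a * c3 x) (a * c4 x).

Definition linner (x y : V4) : R :=
  - c1 x * c1 y + c2 x * c2 y + c3 x * c3 y + c4 x * c4 y.
Definition lnorm (x : V4) : R := sqrt (Rabs (linner x x)).

Definition lc4 (a b c d : R) (X Y Z W : V4) : V4 :=
  vadd (vscal a X) (vadd (vscal b Y) (vadd (vscal c Z) (vscal d W))).

Definition ds (f : R -> R -> R) : R -> R -> R :=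
  fun s t => Derive (fun x => f x t) s.
Definition dt (f : R -> R -> R) : R -> R -> R :=
  fun s t => Derive (fun y => f s y) t.

Definition dsV (F : R -> R -> V4) : R -> R -> V4 :=
  fun s t => mkV4 (ds (fun a b => c1 (F a b)) s t) (ds (fun a b => c2 (F a b)) s t)
                  (ds (fun a b => c3 (F a b)) s t) (ds (fun a b => c4 (F a b)) s t).
Definition dtV (F : R -> R -> V4) : R -> R -> V4 :=
  fun s t => mkV4 (dt (fun a b => c1 (F a b)) s t) (dt (fun a b => c2 (F a b)) s t)
                  (dt (fun a b => c3 (F a b)) s t) (dt (fun a b => c4 (F a b)) s t).

Fixpoint pdn (l : list bool) (f : R -> R -> R) : R -> R -> R :=
  match l with
  | nil => f
  | b :: l' => if b then ds (pdn l' f) else dt (pdn l' f)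
  end.

Definition smooth_on (U : R * R -> Prop) (f : R -> R -> R) : Prop :=
  forall (l : list bool) (p : R * R), U p ->
    ex_derive (fun x => pdn l f x (snd p)) (fst p) /\
    ex_derive (fun y => pdn l f (fst p) y) (snd p) /\
    continuous (fun q : R * R => pdn l f (fst q) (snd q)) p.

Definition smoothV_on (U : R * R -> Prop) (F : R -> R -> V4) : Prop :=
  smooth_on U (fun s t => c1 (F s t)) /\ smooth_on U (fun s t => c2 (F s t)) /\
  smooth_on U (fun s t => c3 (F s t)) /\ smooth_on U (fun s t => c4 (F s t)).

(* Main.v *)
Require Import Defs.
From Stdlib Require Import Reals Lra List.
From Coquelicot Require Import Coquelicot.
Open Scope R_scope.
Definition det3 a b c d e f g h i := a*(e*i - f*h) - b*(d*i - f*g) + c*(d*h - e*g).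
Definition det4 a11 a12 a13 a14 a21 a22 a23 a24 a31 a32 a33 a34 a41 a42 a43 a44 :=
  a11 * det3 a22 a23 a24 a32 a33 a34 a42 a43 a44
 - a12 * det3 a21 a23 a24 a31 a33 a34 a41 a43 a44
 + a13 * det3 a21 a22 a24 a31 a32 a34 a41 a42 a44
 - a14 * det3 a21 a22 a23 a31 a32 a33 a41 a42 a43.

Lemma linner_sym x y : linner x y = linner y x.
Proof. unfold linner; ring. Qed.

Lemma linner_lc4 a b c d X Y Z W V :
  linner (lc4 a b c d X Y Z W) V = a * linner X V + b * linner Y V + c * linner Z V + d * linner W V.
Proof. destruct X, Y, Z, W, V; unfold lc4, vadd, vscal, linner; simpl; ring. Qed.

Lemma frame_zero (T N B1 B2 Y : V4) :
  linner T T = 1 -> linner N N = 1 -> linner B1 B1 = 0 -> linner B2 B2 = 0 ->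
  linner B1 B2 = 1 -> linner T N = 0 -> linner T B1 = 0 -> linner T B2 = 0 ->
  linner N B1 = 0 -> linner N B2 = 0 ->
  linner T Y = 0 -> linner N Y = 0 -> linner B1 Y = 0 -> linner B2 Y = 0 ->
  Y = mkV4 0 0 0 0.
Proof.
  destruct T as [t1 t2 t3 t4], N as [n1 n2 n3 n4], B1 as [p1 p2 p3 p4],
    B2 as [q1 q2 q3 q4], Y as [y1 y2 y3 y4]; unfold linner; simpl.
  intros HTT HNN HPP HQQ HPQ HTN HTP HTQ HNP HNQ HTY HNY HPY HQY.
  set (D := det4 t1 t2 t3 t4 n1 n2 n3 n4 p1 p2 p3 p4 q1 q2 q3 q4).
  assert (HD : D <> 0).
  { assert (E : det4 (-t1*t1+t2*t2+t3*t3+t4*t4) (-t1*n1+t2*n2+t3*n3+t4*n4) (-t1*p1+t2*p2+t3*p3+t4*p4) (-t1*q1+t2*q2+t3*q3+t4*q4)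
                     (-n1*t1+n2*t2+n3*t3+n4*t4) (-n1*n1+n2*n2+n3*n3+n4*n4) (-n1*p1+n2*p2+n3*p3+n4*p4) (-n1*q1+n2*q2+n3*q3+n4*q4)
                     (-p1*t1+p2*t2+p3*t3+p4*t4) (-p1*n1+p2*n2+p3*n3+p4*n4) (-p1*p1+p2*p2+p3*p3+p4*p4) (-p1*q1+p2*q2+p3*q3+p4*q4)
                     (-q1*t1+q2*t2+q3*t3+q4*t4) (-q1*n1+q2*n2+q3*n3+q4*n4) (-q1*p1+q2*p2+q3*p3+q4*p4) (-q1*q1+q2*q2+q3*q3+q4*q4)
                = - D^2) by (unfold D, det4, det3; ring).
    assert (S1 : -n1*t1+n2*t2+n3*t3+n4*t4 = 0) by lra.
    assert (S2 : -p1*t1+p2*t2+p3*t3+p4*t4 = 0) by lra.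
    assert (S3 : -q1*t1+q2*t2+q3*t3+q4*t4 = 0) by lra.
    assert (S4 : -p1*n1+p2*n2+p3*n3+p4*n4 = 0) by lra.
    assert (S5 : -q1*n1+q2*n2+q3*n3+q4*n4 = 0) by lra.
    assert (S6 : -q1*p1+q2*p2+q3*p3+q4*p4 = 1) by lra.
    rewrite HTT, HTN, HTP, HTQ, HNN, HNP, HNQ, HPP, HPQ, HQQ, S1, S2, S3, S4, S5, S6 in E.
    unfold det4, det3 in E. intro H0. rewrite H0 in E. lra. }
  set (z1 := -y1).
  assert (C1 : D * z1 = 0).
  { assert (E : det4 (t1*z1+t2*y2+t3*y3+t4*y4) t2 t3 t4 (n1*z1+n2*y2+n3*y3+n4*y4) n2 n3 n4
       (p1*z1+p2*y2+p3*y3+p4*y4) p2 p3 p4 (q1*z1+q2*y2+q3*y3+q4*y4) q2 q3 q4 = z1 * D)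
      by (unfold D, det4, det3; ring).
    unfold z1 in E. rewrite (Rmult_comm D).
    replace (t1 * - y1 + t2 * y2 + t3 * y3 + t4 * y4) with 0 in E by lra.
    replace (n1 * - y1 + n2 * y2 + n3 * y3 + n4 * y4) with 0 in E by lra.
    replace (p1 * - y1 + p2 * y2 + p3 * y3 + p4 * y4) with 0 in E by lra.
    replace (q1 * - y1 + q2 * y2 + q3 * y3 + q4 * y4) with 0 in E by lra.
    unfold z1; rewrite <- E; unfold det4, det3; ring. }
  assert (C2 : D * y2 = 0).
  { assert (E : det4 t1 (t1*z1+t2*y2+t3*y3+t4*y4) t3 t4 n1 (n1*z1+n2*y2+n3*y3+n4*y4) n3 n4
       p1 (p1*z1+p2*y2+p3*y3+p4*y4) p3 p4 q1 (q1*z1+q2*y2+q3*y3+q4*y4) q3 q4 = y2 * D)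
      by (unfold D, det4, det3; ring).
    unfold z1 in E. rewrite (Rmult_comm D).
    replace (t1 * - y1 + t2 * y2 + t3 * y3 + t4 * y4) with 0 in E by lra.
    replace (n1 * - y1 + n2 * y2 + n3 * y3 + n4 * y4) with 0 in E by lra.
    replace (p1 * - y1 + p2 * y2 + p3 * y3 + p4 * y4) with 0 in E by lra.
    replace (q1 * - y1 + q2 * y2 + q3 * y3 + q4 * y4) with 0 in E by lra.
    rewrite <- E; unfold det4, det3; ring. }
  assert (C3 : D * y3 = 0).
  { assert (E : det4 t1 t2 (t1*z1+t2*y2+t3*y3+t4*y4) t4 n1 n2 (n1*z1+n2*y2+n3*y3+n4*y4) n4
       p1 p2 (p1*z1+p2*y2+p3*y3+p4*y4) p4 q1 q2 (q1*z1+q2*y2+q3*y3+q4*y4) q4 = y3 * D)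
      by (unfold D, det4, det3; ring).
    unfold z1 in E. rewrite (Rmult_comm D).
    replace (t1 * - y1 + t2 * y2 + t3 * y3 + t4 * y4) with 0 in E by lra.
    replace (n1 * - y1 + n2 * y2 + n3 * y3 + n4 * y4) with 0 in E by lra.
    replace (p1 * - y1 + p2 * y2 + p3 * y3 + p4 * y4) with 0 in E by lra.
    replace (q1 * - y1 + q2 * y2 + q3 * y3 + q4 * y4) with 0 in E by lra.
    rewrite <- E; unfold det4, det3; ring. }
  assert (C4 : D * y4 = 0).
  { assert (E : det4 t1 t2 t3 (t1*z1+t2*y2+t3*y3+t4*y4) n1 n2 n3 (n1*z1+n2*y2+n3*y3+n4*y4)
       p1 p2 p3 (p1*z1+p2*y2+p3*y3+p4*y4) q1 q2 q3 (q1*z1+q2*y2+q3*y3+q4*y4) = y4 * D)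
      by (unfold D, det4, det3; ring).
    unfold z1 in E. rewrite (Rmult_comm D).
    replace (t1 * - y1 + t2 * y2 + t3 * y3 + t4 * y4) with 0 in E by lra.
    replace (n1 * - y1 + n2 * y2 + n3 * y3 + n4 * y4) with 0 in E by lra.
    replace (p1 * - y1 + p2 * y2 + p3 * y3 + p4 * y4) with 0 in E by lra.
    replace (q1 * - y1 + q2 * y2 + q3 * y3 + q4 * y4) with 0 in E by lra.
    rewrite <- E; unfold det4, det3; ring. }
  apply Rmult_integral in C1; apply Rmult_integral in C2;
  apply Rmult_integral in C3; apply Rmult_integral in C4.
  destruct C1 as [C1|C1]; [contradiction|]; destruct C2 as [C2|C2]; [contradiction|];
  destruct C3 as [C3|C3]; [contradiction|]; destruct C4 as [C4|C4]; [contradiction|].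
  unfold z1 in C1. f_equal; lra.
Qed.

Lemma frame_decomp (T N B1 B2 X : V4) :
  linner T T = 1 -> linner N N = 1 -> linner B1 B1 = 0 -> linner B2 B2 = 0 ->
  linner B1 B2 = 1 -> linner T N = 0 -> linner T B1 = 0 -> linner T B2 = 0 ->
  linner N B1 = 0 -> linner N B2 = 0 ->
  X = lc4 (linner X T) (linner X N) (linner X B2) (linner X B1) T N B1 B2.
Proof.
  intros HTT HNN HPP HQQ HPQ HTN HTP HTQ HNP HNQ.
  set (P := lc4 (linner X T) (linner X N) (linner X B2) (linner X B1) T N B1 B2).
  set (Y := vadd X (vscal (-1) P)).
  assert (HY : forall F, linner F Y = linner F X - linner F P).
  { intro F; unfold Y; destruct F, X, P; unfold linner, vadd, vscal; simpl; ring. }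
  assert (HP : forall F, linner F P = linner X T * linner T F + linner X N * linner N F
                + linner X B2 * linner B1 F + linner X B1 * linner B2 F).
  { intro F; rewrite linner_sym; unfold P; rewrite linner_lc4; reflexivity. }
  assert (Z : Y = mkV4 0 0 0 0).
  { assert (sTN : linner N T = 0) by (rewrite linner_sym; auto).
    assert (sTP : linner B1 T = 0) by (rewrite linner_sym; auto).
    assert (sTQ : linner B2 T = 0) by (rewrite linner_sym; auto).
    assert (sNP : linner B1 N = 0) by (rewrite linner_sym; auto).
    assert (sNQ : linner B2 N = 0) by (rewrite linner_sym; auto).
    assert (sPQ : linner B2 B1 = 1) by (rewrite linner_sym; auto).
    apply (frame_zero T N B1 B2); auto; rewrite HY, HP;
    rewrite ?HTT, ?HNN, ?HPP, ?HQQ, ?HPQ, ?HTN, ?HTP, ?HTQ, ?HNP, ?HNQ,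
      ?sTN, ?sTP, ?sTQ, ?sNP, ?sNQ, ?sPQ;
    rewrite ?(linner_sym X); ring. }
  unfold Y in Z. destruct X, P. unfold vadd, vscal in Z; simpl in Z. injection Z; intros.
  f_equal; lra.
Qed.

Lemma derive_zero_side (f : R -> R) x :
  ex_derive f x -> f x = 0 ->
  (forall d, 0 < d -> exists h, h <> 0 /\ Rabs h < d /\ f (x + h) = 0) ->
  Derive f x = 0.
Proof.
  intros [df Hdf] H0 Hs.
  rewrite (is_derive_unique _ _ _ Hdf).
  apply is_derive_Reals in Hdf.
  destruct (Req_dec df 0) as [E|E]; [exact E|exfalso].
  assert (Hp : 0 < Rabs df / 2) by (apply Rabs_pos_lt in E; lra).
  destruct (Hdf _ Hp) as [delta Hd].
  destruct (Hs delta (cond_pos delta)) as [h [Hh0 [Hh Hfh]]].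
  specialize (Hd h Hh0 Hh). rewrite Hfh, H0 in Hd.
  replace ((0 - 0) / h - df) with (- df) in Hd by (field; auto).
  rewrite Rabs_Ropp in Hd. apply Rabs_pos_lt in E. lra.
Qed.

Lemma derive_eq_side (f g : R -> R) x :
  ex_derive f x -> ex_derive g x -> f x = g x ->
  (forall d, 0 < d -> exists h, h <> 0 /\ Rabs h < d /\ f (x + h) = g (x + h)) ->
  Derive f x = Derive g x.
Proof.
  intros Hf Hg E Hs.
  assert (Z : Derive (fun y => f y - g y) x = 0).
  { apply derive_zero_side.
    - exact (ex_derive_minus f g x Hf Hg).
    - lra.
    - intros d Hd; destruct (Hs d Hd) as [h [? [? ?]]]; exists h; repeat split; auto; lra. }
  rewrite Derive_minus in Z; auto. lra.
Qed.

Lemma side_t t w : 0 <= t < w -> forall d, 0 < d ->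
  exists h, h <> 0 /\ Rabs h < d /\ 0 <= t + h < w.
Proof.
  intros Ht d Hd. exists (Rmin (d/2) ((w-t)/2)).
  assert (0 < Rmin (d/2) ((w-t)/2)) by (apply Rmin_glb_lt; lra).
  assert (Rmin (d/2) ((w-t)/2) <= d/2) by apply Rmin_l.
  assert (Rmin (d/2) ((w-t)/2) <= (w-t)/2) by apply Rmin_r.
  rewrite Rabs_pos_eq by lra. repeat split; lra.
Qed.

Lemma side_s s l : 0 < l -> 0 <= s <= l -> forall d, 0 < d ->
  exists h, h <> 0 /\ Rabs h < d /\ 0 <= s + h <= l.
Proof.
  intros Hl Hs d Hd.
  assert (0 < Rmin (d/2) (l/2)) by (apply Rmin_glb_lt; lra).
  assert (Rmin (d/2) (l/2) <= d/2) by apply Rmin_l.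
  assert (Rmin (d/2) (l/2) <= l/2) by apply Rmin_r.
  destruct (Rle_lt_dec s (l/2)).
  - exists (Rmin (d/2) (l/2)). rewrite Rabs_pos_eq by lra. repeat split; lra.
  - exists (- Rmin (d/2) (l/2)). rewrite Rabs_Ropp, Rabs_pos_eq by lra. repeat split; lra.
Qed.

Lemma sm_s U f l0 s t : smooth_on U f -> U (s,t) -> ex_derive (fun x => pdn l0 f x t) s.
Proof. intros H HU. exact (proj1 (H l0 (s,t) HU)). Qed.
Lemma sm_t U f l0 s t : smooth_on U f -> U (s,t) -> ex_derive (fun y => pdn l0 f s y) t.
Proof. intros H HU. exact (proj1 (proj2 (H l0 (s,t) HU))). Qed.

Lemma schwarz_on U f s t : open U -> smooth_on U f -> U (s,t) ->
  dt (ds f) s t = ds (dt f) s t.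
Proof.
  intros HO Hf HU.
  assert (Hl : locally_2d (fun u v => U (u,v)) s t).
  { apply locally_2d_locally. specialize (HO _ HU).
    eapply filter_imp; [|exact HO]. intros [a b]; simpl; auto. }
  symmetry. unfold ds, dt. apply Schwarz.
  - eapply locally_2d_impl; [|exact Hl]. apply locally_2d_forall. intros u v Huv.
    repeat split.
    + exact (sm_s U f nil u v Hf Huv).
    + exact (sm_t U f nil u v Hf Huv).
    + exact (sm_s U f (false :: nil) u v Hf Huv).
    + exact (sm_t U f (true :: nil) u v Hf Huv).
  - apply continuity_2d_pt_filterlim.
    exact (proj2 (proj2 (Hf (true :: false :: nil) (s,t) HU))).
  - apply continuity_2d_pt_filterlim.
    exact (proj2 (proj2 (Hf (false :: true :: nil) (s,t) HU))).
Qed.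

Lemma is_derive_mult' f g x df dg : is_derive f x df -> is_derive g x dg ->
  is_derive (fun y => f y * g y) x (df * g x + f x * dg).
Proof. intros H1 H2. exact (is_derive_mult f g x df dg H1 H2 Rmult_comm). Qed.

Lemma is_derive_plus' (f g : R -> R) x df dg : is_derive f x df -> is_derive g x dg ->
  is_derive (fun y => f y + g y) x (df + dg).
Proof. intros H1 H2. exact (is_derive_plus f g x df dg H1 H2). Qed.
Lemma is_derive_opp' (f : R -> R) x df : is_derive f x df ->
  is_derive (fun y => - f y) x (- df).
Proof. intros H1. exact (is_derive_opp f x df H1). Qed.

Lemma is_derive_lc (a b c d X Y Z W : R -> R) x :
  ex_derive a x -> ex_derive b x -> ex_derive c x -> ex_derive d x ->
  ex_derive X x -> ex_derive Y x -> ex_derive Z x -> ex_derive W x ->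
  is_derive (fun y => a y * X y + (b y * Y y + (c y * Z y + d y * W y))) x (
  Derive a x * X x + a x * Derive X x + (Derive b x * Y x + b x * Derive Y x)
  + (Derive c x * Z x + c x * Derive Z x) + (Derive d x * W x + d x * Derive W x)).
Proof.
  intros Ha Hb Hc Hd HX HY HZ HW.
  apply Derive_correct in Ha, Hb, Hc, Hd, HX, HY, HZ, HW.
  eapply is_derive_ext. { intro y. reflexivity. }
  replace (Derive a x * X x + a x * Derive X x + (Derive b x * Y x + b x * Derive Y x)
  + (Derive c x * Z x + c x * Derive Z x) + (Derive d x * W x + d x * Derive W x))
  with ((Derive a x * X x + a x * Derive X x) + ((Derive b x * Y x + b x * Derive Y x)
  + ((Derive c x * Z x + c x * Derive Z x) + (Derive d x * W x + d x * Derive W x)))) by ring.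
  apply is_derive_plus'. apply is_derive_mult'; auto.
  apply is_derive_plus'. apply is_derive_mult'; auto.
  apply is_derive_plus'; apply is_derive_mult'; auto.
Qed.

Lemma is_derive_li (X1 X2 X3 X4 Y1 Y2 Y3 Y4 : R -> R) x :
  ex_derive X1 x -> ex_derive X2 x -> ex_derive X3 x -> ex_derive X4 x ->
  ex_derive Y1 x -> ex_derive Y2 x -> ex_derive Y3 x -> ex_derive Y4 x ->
  is_derive (fun y => linner (mkV4 (X1 y) (X2 y) (X3 y) (X4 y)) (mkV4 (Y1 y) (Y2 y) (Y3 y) (Y4 y))) x (
  linner (mkV4 (Derive X1 x) (Derive X2 x) (Derive X3 x) (Derive X4 x)) (mkV4 (Y1 x) (Y2 x) (Y3 x) (Y4 x))
  + linner (mkV4 (X1 x) (X2 x) (X3 x) (X4 x)) (mkV4 (Derive Y1 x) (Derive Y2 x) (Derive Y3 x) (Derive Y4 x))).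
Proof.
  intros H1 H2 H3 H4 H5 H6 H7 H8.
  apply Derive_correct in H1, H2, H3, H4, H5, H6, H7, H8.
  unfold linner; simpl.
  replace (- Derive X1 x * Y1 x + Derive X2 x * Y2 x + Derive X3 x * Y3 x + Derive X4 x * Y4 x +
   (- X1 x * Derive Y1 x + X2 x * Derive Y2 x + X3 x * Derive Y3 x + X4 x * Derive Y4 x))
  with ((((- (Derive X1 x * Y1 x + X1 x * Derive Y1 x))) + (Derive X2 x * Y2 x + X2 x * Derive Y2 x))
    + (Derive X3 x * Y3 x + X3 x * Derive Y3 x) + (Derive X4 x * Y4 x + X4 x * Derive Y4 x)) by ring.
  apply (is_derive_ext (fun y => - (X1 y * Y1 y) + X2 y * Y2 y + X3 y*Y3 y + X4 y*Y4 y)).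
  { intro t; cbn; ring. }
  apply is_derive_plus'; [apply is_derive_plus'; [apply is_derive_plus'|]|];
    try apply is_derive_mult'; auto.
  apply is_derive_opp'. apply is_derive_mult'; auto.
Qed.

Lemma dt_inner_const U s t w (X Y : R -> R -> V4) c :
  smoothV_on U X -> smoothV_on U Y -> U (s,t) -> 0 <= t < w ->
  (forall t', 0 <= t' < w -> linner (X s t') (Y s t') = c) ->
  linner (dtV X s t) (Y s t) + linner (X s t) (dtV Y s t) = 0.
Proof.
  intros [HX1 [HX2 [HX3 HX4]]] [HY1 [HY2 [HY3 HY4]]] HU Ht Hc.
  pose proof (is_derive_li (fun y => Defs.c1 (X s y)) (fun y => c2 (X s y)) (fun y => c3 (X s y)) (fun y => c4 (X s y))
     (fun y => Defs.c1 (Y s y)) (fun y => c2 (Y s y)) (fun y => c3 (Y s y)) (fun y => c4 (Y s y)) t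
     (sm_t U _ nil s t HX1 HU) (sm_t U _ nil s t HX2 HU) (sm_t U _ nil s t HX3 HU) (sm_t U _ nil s t HX4 HU)
     (sm_t U _ nil s t HY1 HU) (sm_t U _ nil s t HY2 HU) (sm_t U _ nil s t HY3 HU) (sm_t U _ nil s t HY4 HU)) as H.
  assert (E : Derive (fun y => linner (mkV4 (Defs.c1 (X s y)) (c2 (X s y)) (c3 (X s y)) (c4 (X s y)))
                                   (mkV4 (Defs.c1 (Y s y)) (c2 (Y s y)) (c3 (Y s y)) (c4 (Y s y)))) t
              = Derive (fun _ => c) t).
  { apply derive_eq_side.
    - eexists; exact H.
    - apply ex_derive_const.
    - apply (Hc t Ht).
    - intros d Hd. destruct (side_t t w Ht d Hd) as [h [? [? ?]]]. exists h; repeat split; auto.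
      apply (Hc (t+h)); auto. }
  rewrite Derive_const in E. pose proof (is_derive_unique _ _ _ H) as E2.
  exact (eq_trans (eq_sym E2) E).
Qed.

Theorem lemma3p5
  (l w : R) (Hl : 0 < l) (Hw : 0 < w)
  (U : R * R -> Prop) (HUopen : open U)
  (HDU : forall s t, 0 <= s <= l -> 0 <= t < w -> U (s, t))
  (gamma T N B1 B2 : R -> R -> V4)
  (k1 k2 k3 beta1 beta2 beta3 beta4 : R -> R -> R)
  (Hsg : smoothV_on U gamma) (HsT : smoothV_on U T) (HsN : smoothV_on U N)
  (HsB1 : smoothV_on U B1) (HsB2 : smoothV_on U B2)
  (Hsk1 : smooth_on U k1) (Hsk2 : smooth_on U k2) (Hsk3 : smooth_on U k3)
  (Hsb1 : smooth_on U beta1) (Hsb2 : smooth_on U beta2)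
  (Hsb3 : smooth_on U beta3) (Hsb4 : smooth_on U beta4)
  (Hframe : forall s t, 0 <= s <= l -> 0 <= t < w ->
     (T s t = dsV gamma s t /\
         linner (T s t) (T s t) = 1 /\ linner (N s t) (N s t) = 1/\
         linner (B1 s t) (B1 s t) = 0 /\ linner (B2 s t) (B2 s t) = 0/\
         linner (B1 s t) (B2 s t) = 1/\
         linner (T s t) (N s t) = 0 /\ linner (T s t) (B1 s t) = 0/\
         linner (T s t) (B2 s t) = 0 /\ linner (N s t) (B1 s t) = 0 /\
         linner (N s t) (B2 s t) = 0))
  (Hfrenet : forall s t, 0 <= s <= l -> 0 <= t < w ->
     (dsV T s t = vscal (k1 s t) (N s t) /\
         dsV N s t = vadd (vscal (- k1 s t) (T s t)) (vscal (k2 s t) (B1 s t)) /\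
         dsV B1 s t = vscal (k3 s t) (B1 s t) /\
         dsV B2 s t = vadd (vscal (- k2 s t) (N s t)) (vscal (- k3 s t) (B2 s t)) /\
         k3 s t = 0))
  (Harc : forall s t, 0 <= s <= l -> 0 <= t < w -> lnorm (dsV gamma s t) = 1)
  (Hinext : forall s t, 0 <= s <= l -> 0 <= t < w ->
     dt (fun a b => lnorm (dsV gamma a b)) s t = 0)
  (Hvar : forall s t, 0 <= s <= l -> 0 <= t < w ->
     dtV gamma s t =
       lc4 (beta1 s t) (beta2 s t) (beta3 s t) (beta4 s t)
           (T s t) (N s t) (B1 s t) (B2 s t)) :
  let psi1 := fun s t => linner (dtV N s t) (B1 s t) in
  let psi2 := fun s t => linner (dtV N s t) (B2 s t) in
  let psi3 := fun s t => linner (dtV B1 s t) (B2 s t) in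
  forall s t, 0 <= s <= l -> 0 <= t < w ->
    (dtV T s t =
          lc4 0 (ds beta2 s t + beta1 s t * k1 s t - beta4 s t * k2 s t)
                (ds beta3 s t + beta2 s t * k2 s t) (ds beta4 s t)
              (T s t) (N s t) (B1 s t) (B2 s t) /\
        dtV N s t =
          lc4 (- (ds beta2 s t + beta1 s t * k1 s t - beta4 s t * k2 s t)) 0
              (psi2 s t) (psi1 s t)
              (T s t) (N s t) (B1 s t) (B2 s t) /\
        dtV B1 s t =
          lc4 (- ds beta4 s t) (- psi1 s t) (psi3 s t) 0
              (T s t) (N s t) (B1 s t) (B2 s t) /\
        dtV B2 s t =
          lc4 (- (ds beta3 s t + k2 s t * beta2 s t)) (- psi2 s t) 0 (- psi3 s t)
              (T s t) (N s t) (B1 s t) (B2 s t)).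
Proof.
  intros psi1 psi2 psi3 s t Hs Ht.
  pose proof (HDU s t Hs Ht) as HU.
  destruct (Hframe s t Hs Ht) as [HTg [HTT [HNN [HPP [HQQ [HPQ [HTN [HTP [HTQ [HNP HNQ]]]]]]]]]].
  assert (stepA : forall p : V4 -> R,
    (forall a b c d X Y Z W, p (lc4 a b c d X Y Z W) = a * p X + (b * p Y + (c * p Z + d * p W))) ->
    (forall F a b, p (dsV F a b) = ds (fun x y => p (F x y)) a b) ->
    (forall F a b, p (dtV F a b) = dt (fun x y => p (F x y)) a b) ->
    (forall a X, p (vscal a X) = a * p X) ->
    (forall X Y, p (vadd X Y) = p X + p Y) ->
    smooth_on U (fun x y => p (gamma x y)) -> smooth_on U (fun x y => p (T x y)) ->
    smooth_on U (fun x y => p (N x y)) -> smooth_on U (fun x y => p (B1 x y)) ->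
    smooth_on U (fun x y => p (B2 x y)) ->
    dt (fun x y => p (T x y)) s t =
      (ds beta1 s t - beta2 s t * k1 s t) * p (T s t)
      + (beta1 s t * k1 s t + ds beta2 s t - beta4 s t * k2 s t) * p (N s t)
      + (ds beta3 s t + beta2 s t * k2 s t) * p (B1 s t)
      + ds beta4 s t * p (B2 s t)).
  { intros p Plc Pds Pdt Psc Padd Hg HT HN HP HQ.
    set (f := fun x y => p (gamma x y)).
    assert (E1 : dt (fun x y => p (T x y)) s t = dt (ds f) s t).
    { unfold dt. apply derive_eq_side.
      - exact (sm_t U _ nil s t HT HU).
      - exact (sm_t U f (true :: nil) s t Hg HU).
      - rewrite HTg, Pds; reflexivity.
      - intros d Hd. destruct (side_t t w Ht d Hd) as [h [? [? ?]]]. exists h; repeat split; auto.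
        destruct (Hframe s (t+h) Hs H1) as [E _]. rewrite E, Pds; reflexivity. }
    assert (E2 : dt (ds f) s t = ds (dt f) s t) by (apply (schwarz_on U); auto).
    assert (Hlc := is_derive_lc (fun x => beta1 x t) (fun x => beta2 x t) (fun x => beta3 x t) (fun x => beta4 x t)
      (fun x => p (T x t)) (fun x => p (N x t)) (fun x => p (B1 x t)) (fun x => p (B2 x t)) s
      (sm_s U _ nil s t Hsb1 HU) (sm_s U _ nil s t Hsb2 HU) (sm_s U _ nil s t Hsb3 HU) (sm_s U _ nil s t Hsb4 HU)
      (sm_s U _ nil s t HT HU) (sm_s U _ nil s t HN HU) (sm_s U _ nil s t HP HU) (sm_s U _ nil s t HQ HU)).
    assert (E3 : ds (dt f) s t = Derive (fun x => beta1 x t * p (T x t) + (beta2 x t * p (N x t) +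
                    (beta3 x t * p (B1 x t) + beta4 x t * p (B2 x t)))) s).
    { unfold ds. apply derive_eq_side.
      - exact (sm_s U f (false :: nil) s t Hg HU).
      - eexists; exact Hlc.
      - unfold f; rewrite <- Pdt, (Hvar s t Hs Ht), Plc; reflexivity.
      - intros d Hd. destruct (side_s s l Hl Hs d Hd) as [h [? [? ?]]]. exists h; repeat split; auto.
        unfold f; rewrite <- Pdt, (Hvar (s+h) t H1 Ht), Plc; reflexivity. }
    assert (E4 : Derive (fun x => beta1 x t * p (T x t) + (beta2 x t * p (N x t) +
                    (beta3 x t * p (B1 x t) + beta4 x t * p (B2 x t)))) s =
      Derive (fun x => beta1 x t) s * p (T s t) + beta1 s t * Derive (fun x => p (T x t)) s +
      (Derive (fun x => beta2 x t) s * p (N s t) + beta2 s t * Derive (fun x => p (N x t)) s) +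
      (Derive (fun x => beta3 x t) s * p (B1 s t) + beta3 s t * Derive (fun x => p (B1 x t)) s) +
      (Derive (fun x => beta4 x t) s * p (B2 s t) + beta4 s t * Derive (fun x => p (B2 x t)) s))
      by exact (is_derive_unique _ _ _ Hlc).
    rewrite E1, E2, E3, E4.
    destruct (Hfrenet s t Hs Ht) as [F1 [F2 [F3 [F4 F5]]]].
    assert (D1 : Derive (fun x => p (T x t)) s = k1 s t * p (N s t)).
    { change (ds (fun x y => p (T x y)) s t = k1 s t * p (N s t)). rewrite <- Pds, F1, Psc; reflexivity. }
    assert (D2 : Derive (fun x => p (N x t)) s = - k1 s t * p (T s t) + k2 s t * p (B1 s t)).
    { change (ds (fun x y => p (N x y)) s t = - k1 s t * p (T s t) + k2 s t * p (B1 s t)).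
      rewrite <- Pds, F2, Padd, !Psc; reflexivity. }
    assert (D3 : Derive (fun x => p (B1 x t)) s = k3 s t * p (B1 s t)).
    { change (ds (fun x y => p (B1 x y)) s t = k3 s t * p (B1 s t)). rewrite <- Pds, F3, Psc; reflexivity. }
    assert (D4 : Derive (fun x => p (B2 x t)) s = - k2 s t * p (N s t) + - k3 s t * p (B2 s t)).
    { change (ds (fun x y => p (B2 x y)) s t = - k2 s t * p (N s t) + - k3 s t * p (B2 s t)).
      rewrite <- Pds, F4, Padd, !Psc; reflexivity. }
    rewrite D1, D2, D3, D4, F5. unfold ds. ring. }
  destruct Hsg as [g1 [g2 [g3 g4]]]. destruct HsT as [T1 [T2 [T3 T4]]].
  destruct HsN as [N1 [N2 [N3 N4]]]. destruct HsB1 as [P1 [P2 [P3 P4]]].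
  destruct HsB2 as [Q1 [Q2 [Q3 Q4]]].
  pose proof (stepA Defs.c1 (fun _ _ _ _ _ _ _ _ => eq_refl) (fun _ _ _ => eq_refl) (fun _ _ _ => eq_refl)
     (fun _ _ => eq_refl) (fun _ _ => eq_refl) g1 T1 N1 P1 Q1) as A1.
  pose proof (stepA c2 (fun _ _ _ _ _ _ _ _ => eq_refl) (fun _ _ _ => eq_refl) (fun _ _ _ => eq_refl)
     (fun _ _ => eq_refl) (fun _ _ => eq_refl) g2 T2 N2 P2 Q2) as A2.
  pose proof (stepA c3 (fun _ _ _ _ _ _ _ _ => eq_refl) (fun _ _ _ => eq_refl) (fun _ _ _ => eq_refl)
     (fun _ _ => eq_refl) (fun _ _ => eq_refl) g3 T3 N3 P3 Q3) as A3.
  pose proof (stepA c4 (fun _ _ _ _ _ _ _ _ => eq_refl) (fun _ _ _ => eq_refl) (fun _ _ _ => eq_refl)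
     (fun _ _ => eq_refl) (fun _ _ => eq_refl) g4 T4 N4 P4 Q4) as A4.
  clear stepA.
  assert (HdT : dtV T s t = lc4 (ds beta1 s t - beta2 s t * k1 s t)
      (ds beta2 s t + beta1 s t * k1 s t - beta4 s t * k2 s t)
      (ds beta3 s t + beta2 s t * k2 s t) (ds beta4 s t) (T s t) (N s t) (B1 s t) (B2 s t)).
  { unfold dtV. rewrite A1, A2, A3, A4. unfold lc4, vadd, vscal; simpl. f_equal; ring. }
  assert (sTN : linner (N s t) (T s t) = 0) by (rewrite linner_sym; auto).
  assert (sTP : linner (B1 s t) (T s t) = 0) by (rewrite linner_sym; auto).
  assert (sTQ : linner (B2 s t) (T s t) = 0) by (rewrite linner_sym; auto).
  assert (sNP : linner (B1 s t) (N s t) = 0) by (rewrite linner_sym; auto).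
  assert (sNQ : linner (B2 s t) (N s t) = 0) by (rewrite linner_sym; auto).
  assert (sPQ : linner (B2 s t) (B1 s t) = 1) by (rewrite linner_sym; auto).
  assert (HsT : smoothV_on U T) by exact (conj T1 (conj T2 (conj T3 T4))).
  assert (HsN : smoothV_on U N) by exact (conj N1 (conj N2 (conj N3 N4))).
  assert (HsP : smoothV_on U B1) by exact (conj P1 (conj P2 (conj P3 P4))).
  assert (HsQ : smoothV_on U B2) by exact (conj Q1 (conj Q2 (conj Q3 Q4))).
  assert (ITT := dt_inner_const U s t w T T 1 HsT HsT HU Ht (fun t' Ht' => proj1 (proj2 (Hframe s t' Hs Ht')))).
  assert (ITN := dt_inner_const U s t w T N 0 HsT HsN HU Ht
     (fun t' Ht' => match Hframe s t' Hs Ht' with conj _ (conj _ (conj _ (conj _ (conj _ (conj _ (conj H _)))))) => H end)).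
  assert (ITP := dt_inner_const U s t w T B1 0 HsT HsP HU Ht
     (fun t' Ht' => match Hframe s t' Hs Ht' with conj _ (conj _ (conj _ (conj _ (conj _ (conj _ (conj _ (conj H _))))))) => H end)).
  assert (ITQ := dt_inner_const U s t w T B2 0 HsT HsQ HU Ht
     (fun t' Ht' => match Hframe s t' Hs Ht' with conj _ (conj _ (conj _ (conj _ (conj _ (conj _ (conj _ (conj _ (conj H _)))))))) => H end)).
  assert (INN := dt_inner_const U s t w N N 1 HsN HsN HU Ht
     (fun t' Ht' => match Hframe s t' Hs Ht' with conj _ (conj _ (conj H _)) => H end)).
  assert (INP := dt_inner_const U s t w N B1 0 HsN HsP HU Ht
     (fun t' Ht' => match Hframe s t' Hs Ht' with conj _ (conj _ (conj _ (conj _ (conj _ (conj _ (conj _ (conj _ (conj _ (conj H _))))))))) => H end)).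
  assert (INQ := dt_inner_const U s t w N B2 0 HsN HsQ HU Ht
     (fun t' Ht' => match Hframe s t' Hs Ht' with conj _ (conj _ (conj _ (conj _ (conj _ (conj _ (conj _ (conj _ (conj _ (conj _ H))))))))) => H end)).
  assert (IPP := dt_inner_const U s t w B1 B1 0 HsP HsP HU Ht
     (fun t' Ht' => match Hframe s t' Hs Ht' with conj _ (conj _ (conj _ (conj H _))) => H end)).
  assert (IPQ := dt_inner_const U s t w B1 B2 1 HsP HsQ HU Ht
     (fun t' Ht' => match Hframe s t' Hs Ht' with conj _ (conj _ (conj _ (conj _ (conj _ (conj H _))))) => H end)).
  assert (IQQ := dt_inner_const U s t w B2 B2 0 HsQ HsQ HU Ht
     (fun t' Ht' => match Hframe s t' Hs Ht' with conj _ (conj _ (conj _ (conj _ (conj H _)))) => H end)).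
  subst psi1 psi2 psi3; cbv beta.
  set (dT := dtV T s t) in *. set (dN := dtV N s t) in *. set (dP := dtV B1 s t) in *. set (dQ := dtV B2 s t) in *.
  assert (LT : forall V, linner dT V = (ds beta1 s t - beta2 s t * k1 s t) * linner (T s t) V +
      (ds beta2 s t + beta1 s t * k1 s t - beta4 s t * k2 s t) * linner (N s t) V +
      (ds beta3 s t + beta2 s t * k2 s t) * linner (B1 s t) V + ds beta4 s t * linner (B2 s t) V).
  { intro V; rewrite HdT, linner_lc4; reflexivity. }
  assert (Hc0 : ds beta1 s t - beta2 s t * k1 s t = 0).
  { rewrite (linner_sym (T s t) dT) in ITT. rewrite LT, HTT, sTN, sTP, sTQ in ITT. lra. }
  assert (dTN : linner dT (N s t) = ds beta2 s t + beta1 s t * k1 s t - beta4 s t * k2 s t).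
  { rewrite LT, HNN, HTN, sNP, sNQ; ring. }
  assert (dTP : linner dT (B1 s t) = ds beta4 s t).
  { rewrite LT, HPP, HTP, HNP, sPQ; ring. }
  assert (dTQ : linner dT (B2 s t) = ds beta3 s t + beta2 s t * k2 s t).
  { rewrite LT, HQQ, HTQ, HNQ, HPQ; ring. }
  assert (GG : forall X, X = lc4 (linner X (T s t)) (linner X (N s t)) (linner X (B2 s t)) (linner X (B1 s t))
                    (T s t) (N s t) (B1 s t) (B2 s t)).
  { intro X; apply frame_decomp; auto. }
  rewrite (linner_sym (N s t) dN) in INN.
  rewrite (linner_sym (B1 s t) dP) in IPP.
  rewrite (linner_sym (B2 s t) dQ) in IQQ.
  rewrite (linner_sym (T s t) dN) in ITN.
  rewrite (linner_sym (T s t) dP) in ITP.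
  rewrite (linner_sym (T s t) dQ) in ITQ.
  rewrite (linner_sym (N s t) dP) in INP.
  rewrite (linner_sym (N s t) dQ) in INQ.
  rewrite (linner_sym (B1 s t) dQ) in IPQ.
  clearbody dT dN dP dQ.
  split; [|split; [|split]].
  - rewrite HdT, Hc0. reflexivity.
  - rewrite (GG dN) at 1. f_equal; try reflexivity; lra.
  - rewrite (GG dP) at 1. f_equal; try reflexivity; try lra.
  - rewrite (GG dQ) at 1. f_equal; try reflexivity; try lra.
Qed.
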